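(* Let $\mathfrak{L}$ be a left Leibniz algebra over a field $\mathbb{F}$, and let $M$ be a left $\mathfrak{L}$-module. Then: (a) $\mathrm{HL}^n(\mathfrak{L},M_s)=\widetilde{\mathrm{HL}}^n(\mathfrak{L},M)$ for every integer $n\ge 0$; (b) $\mathrm{HL}^0(\mathfrak{L},M_a)=M$, and $\mathrm{HL}^n(\mathfrak{L},M_a)\cong\widetilde{\mathrm{HL}}^{n-1}(\mathfrak{L},\mathrm{Hom}_{\mathbb{F}}(\mathfrak{L},M))=\mathrm{HL}^{n-1}(\mathfrak{L},\mathrm{Hom}_{\mathbb{F}}(\mathfrak{L},M)_s)$ for every integer $n\ge 1$, where $\mathrm{Hom}_{\mathbb{F}}(\mathfrak{L},M)$ is a left $\mathfrak{L}$-module via $(x\cdot f)(y):=x\cdot f(y)-f(xy)$.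
   Context: A left Leibniz algebra is a vector space with bilinear product satisfying $x(yz)=(xy)z+y(xz)$. A left $\mathfrak{L}$-module is a vector space $M$ with bilinear $x\cdot m$ such that $(xy)\cdot m=x\cdot(y\cdot m)-y\cdot(x\cdot m)$. A bimodule additionally has a right action with $(x\cdot m)\cdot y=x\cdot(m\cdot y)-m\cdot(xy)$ and $(m\cdot x)\cdot y=m\cdot(xy)-x\cdot(m\cdot y)$. For a left module $M$, $M_s$ is the bimodule with right action $m\cdot x:=-x\cdot m$ and $M_a$ the bimodule with right action $m\cdot x:=0$. $\mathrm{HL}^n(\mathfrak{L},M)$ is the cohomology of $\mathrm{CL}^n(\mathfrak{L},M)=\mathrm{Hom}_{\mathbb{F}}(\mathfrak{L}^{\otimes n},M)$ with $(\mathrm{d}^nf)(x_1,\dots,x_{n+1})=\sum_{i=1}^n(-1)^{i+1}x_i\cdot f(\dots,\hat{x}_i,\dots)+(-1)^{n+1}f(x_1,\dots,x_n)\cdot x_{n+1}+\sum_{i<j}(-1)^if(x_1,\dots,\hat{x}_i,\dots,x_ix_j,\dots,x_{n+1})$ ($x_ix_j$ in the $j$-th position). For a left module $M$, $\widetilde{\mathrm{HL}}^n(\mathfrak{L},M)$ is the cohomology of $\mathrm{CL}^n(\mathfrak{L},M)$ with $(\widetilde{\mathrm{d}}^nf)(x_1,\dots,x_{n+1})=\sum_{i=1}^{n+1}(-1)^{i+1}x_i\cdot f(x_1,\dots,\hat{x}_i,\dots,x_{n+1})+\sum_{i<j}(-1)^if(x_1,\dots,\hat{x}_i,\dots,x_ix_j,\dots,x_{n+1})$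 ($x_ix_j$ in the $j$-th position). *)

(* Defs.v *)
From HB Require Import structures.
From mathcomp Require Import all_boot all_order all_algebra.
From mathcomp Require Import boolp functions.
Set Implicit Arguments.
Unset Strict Implicit.
Unset Printing Implicit Defensive.
Import GRing.Theory.
Local Open Scope ring_scope.

Definition bilinear_map (F : fieldType) (A B C : lmodType F) (p : A -> B -> C) :=
  (forall x a u v, p x (a *: u + v) = a *: p x u + p x v) /\
  (forall y a u v, p (a *: u + v) y = a *: p u y + p v y).

Definition left_leibniz (F : fieldType) (L : lmodType F) (mul : L -> L -> L) :=
  bilinear_map mul /\
  forall x y z, mul x (mul y z) = mul (mul x y) z + mul y (mul x z).

Definition left_module (F : fieldType) (L V : lmodType F)
    (mul : L -> L -> L) (act : L -> V -> V) :=
  bilinear_map act /\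
  forall x y m, act (mul x y) m = act x (act y m) - act y (act x m).

Definition ract_s (F : fieldType) (L V : lmodType F) (act : L -> V -> V) :
  V -> L -> V := fun m x => - act x m.
Definition ract_a (F : fieldType) (L V : lmodType F) :
  V -> L -> V := fun _ _ => 0.

(* Cochains: CL^n(L,V) = Hom_F(L^{(x)n}, V) = n-multilinear maps L^n -> V.   *)
(* An n-tuple of arguments is a finite function 'I_n -> L (0-indexed).       *)

Definition cochain (L V : Type) (n : nat) := {ffun 'I_n -> L} -> V.

Definition upd (L : Type) n (x : {ffun 'I_n -> L}) (k : 'I_n) (u : L) :
  {ffun 'I_n -> L} := [ffun l => if l == k then u else x l].

Definition multilinear (F : fieldType) (L V : lmodType F) n (f : cochain L V n) :=
  forall (k : 'I_n) (x : {ffun 'I_n -> L}) (a : F) (u v : L),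
    f (upd x k (a *: u + v)) = a *: f (upd x k u) + f (upd x k v).

Definition del (L : Type) n (i : 'I_n.+1) (x : {ffun 'I_n.+1 -> L}) :
  {ffun 'I_n -> L} := [ffun k => x (lift i k)].

Definition delmul (L : Type) (mul : L -> L -> L) n (i j : 'I_n.+1)
  (x : {ffun 'I_n.+1 -> L}) : {ffun 'I_n -> L} :=
  [ffun k => if lift i k == j then mul (x i) (x j) else x (lift i k)].

(* The Leibniz coboundary d^n for a bimodule with left action act and right  *)
(* action ract (indices are 0-based, so the signs are shifted accordingly):  *)
(* (d^n f)(x_1..x_{n+1}) = sum_{i=1}^n (-1)^{i+1} x_i . f(..\hat x_i..)       *)
(*    + (-1)^{n+1} f(x_1..x_n) . x_{n+1}                                     *)
(*    + sum_{i<j} (-1)^i f(..\hat x_i.., x_i x_j, ..)                         *)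
Definition dHL (F : fieldType) (L V : lmodType F) (mul : L -> L -> L)
    (act : L -> V -> V) (ract : V -> L -> V) n (f : cochain L V n) :
    cochain L V n.+1 := fun x =>
  \sum_(i < n.+1 | (i < n)%N) (-1) ^+ i *: act (x i) (f (del i x))
  + (-1) ^+ n.+1 *: ract (f (del ord_max x)) (x ord_max)
  + \sum_(i < n.+1) \sum_(j < n.+1 | (i < j)%N)
       (-1) ^+ i.+1 *: f (delmul mul i j x).

Definition dHLt (F : fieldType) (L V : lmodType F) (mul : L -> L -> L)
    (act : L -> V -> V) n (f : cochain L V n) : cochain L V n.+1 := fun x =>
  \sum_(i < n.+1) (-1) ^+ i *: act (x i) (f (del i x))
  + \sum_(i < n.+1) \sum_(j < n.+1 | (i < j)%N)
       (-1) ^+ i.+1 *: f (delmul mul i j x).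

Definition cocycle (F : fieldType) (L V : lmodType F)
    (d : forall n, cochain L V n -> cochain L V n.+1) n (f : cochain L V n) :=
  multilinear f /\ forall x, d n f x = 0.

Definition coboundary (F : fieldType) (L V : lmodType F)
    (d : forall n, cochain L V n -> cochain L V n.+1) n : cochain L V n -> Prop :=
  match n return cochain L V n -> Prop with
  | 0 => fun f => forall x, f x = 0
  | m.+1 => fun f => exists g : cochain L V m, multilinear g /\ forall x, f x = d m g x
  end.

(* Equality of the n-th cohomology spaces of two complexes on the same      *)
(* cochain spaces: same cocycles and same coboundaries (hence Z/B = Z'/B').  *)
Definition same_cohomology (F : fieldType) (L V : lmodType F)
    (d1 d2 : forall n, cochain L V n -> cochain L V n.+1) n :=
  (forall f, cocycle d1 f <-> cocycle d2 (n := n) f) /\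
  (forall f, coboundary d1 f <-> coboundary d2 (n := n) f).

(* Linear isomorphism H^{n1}(d1) = Z1/B1  ~=  Z2/B2 = H^{n2}(d2): a map phi   *)
(* which is linear on cocycles, maps Z1 into Z2 and B1 into B2, and induces  *)
(* a bijection of the quotients.  (Over a field every linear map Z1/B1 ->    *)
(* Z2/B2 lifts to Z1 -> Z2, so this is exactly "the quotients are isomorphic".) *)
Definition cohomology_iso (F : fieldType) (L V W : lmodType F)
    (d1 : forall n, cochain L V n -> cochain L V n.+1)
    (d2 : forall n, cochain L W n -> cochain L W n.+1) n1 n2 :=
  exists phi : cochain L V n1 -> cochain L W n2,
    [/\ forall f, cocycle d1 f -> cocycle d2 (phi f),
        forall a f g, cocycle d1 f -> cocycle d1 g ->
          phi (a *: f + g) = a *: phi f + phi g,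
        forall f, cocycle d1 f -> coboundary d1 f -> coboundary d2 (phi f),
        forall f, cocycle d1 f -> coboundary d2 (phi f) -> coboundary d1 f
      & forall h, cocycle d2 h -> exists2 f, cocycle d1 f & coboundary d2 (phi f - h)].

Section HomSpace.
Variables (F : fieldType) (L M : lmodType F).

Definition is_linmap (h : L -> M) : bool :=
  `[< forall a u v, h (a *: u + v) = a *: h u + h v >].
Definition linmap : qualifier 0 (L -> M) := [qualify h | is_linmap h].

Lemma linmap_submod_closed : submod_closed linmap.
Proof.
split.
  by rewrite qualifE; apply/asboolP => a u v /=; rewrite scaler0 addr0.
move=> a f g; rewrite !qualifE => /asboolP Hf /asboolP Hg; apply/asboolP.
move=> b u v; rewrite !fctE Hf Hg !scalerDr !scalerA mulrC.
by rewrite -!addrA; congr (_ + _); rewrite !addrA; congr (_ + _); rewrite addrC.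
Qed.

HB.instance Definition _ := GRing.isSubmodClosed.Build F (L -> M) is_linmap
  linmap_submod_closed.

Record hom := Hom { hom_val :> L -> M; hom_valP : hom_val \is linmap }.
HB.instance Definition _ := [isSub for hom_val].
HB.instance Definition _ := [Choice of hom by <:].
HB.instance Definition _ := [SubChoice_isSubLmodule of hom by <:].

End HomSpace.

(* (When act and mul are bilinear the right-hand side is linear in y; the     *)
(* default 0 of insubd is never used under the hypotheses of the theorem.)    *)
Definition hom_act (F : fieldType) (L M : lmodType F) (mul : L -> L -> L)
    (act : L -> M -> M) (x : L) (h : hom L M) : hom L M :=
  insubd 0 (fun y => act x (h y) - h (mul x y)).

(* Main.v *)
Require Import Defs.
From HB Require Import structures.
From mathcomp Require Import all_boot all_order all_algebra.
From mathcomp Require Import boolp functions.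
From mathcomp Require Import zify.
Set Implicit Arguments.
Unset Strict Implicit.
Unset Printing Implicit Defensive.
Import GRing.Theory.
Local Open Scope ring_scope.

Section Ord.
Variable T : Type.

Definition ext n (w : {ffun 'I_n -> T}) (y : T) : {ffun 'I_n.+1 -> T} :=
  [ffun k : 'I_n.+1 => if insub (val k) is Some k' then w k' else y].
Definition init n (x : {ffun 'I_n.+1 -> T}) : {ffun 'I_n -> T} :=
  [ffun k => x (widen_ord (leqnSn n) k)].

Lemma extL n (w : {ffun 'I_n -> T}) y (k : 'I_n.+1) (k' : 'I_n) :
  val k = val k' -> ext w y k = w k'.
Proof.
move=> H; rewrite ffunE; case: insubP => [u _ Hu|].
  by congr (w _); apply: val_inj; rewrite Hu H.
by rewrite H ltn_ord.
Qed.

Lemma extR n (w : {ffun 'I_n -> T}) y (k : 'I_n.+1) :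
  val k = n -> ext w y k = y.
Proof.
move=> H; rewrite ffunE; case: insubP => [u Hu _|//].
by move: Hu; rewrite H ltnn.
Qed.

Lemma ext_widen n (w : {ffun 'I_n -> T}) y i :
  ext w y (widen_ord (leqnSn n) i) = w i.
Proof. by apply: extL. Qed.

Lemma ext_max n (w : {ffun 'I_n -> T}) y : ext w y ord_max = y.
Proof. by apply: extR. Qed.

Lemma ordcase n (k : 'I_n.+1) :
  (exists k' : 'I_n, k = widen_ord (leqnSn n) k') \/ k = ord_max.
Proof.
case: (ltnP k n) => H.
  by left; exists (Ordinal H); apply: val_inj.
right; apply: val_inj => /=; have := ltn_ord k; lia.
Qed.

Lemma init_ext n (w : {ffun 'I_n -> T}) y : init (ext w y) = w.
Proof. by apply/ffunP => k; rewrite ffunE ext_widen. Qed.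

Lemma ext_init n (x : {ffun 'I_n.+1 -> T}) : ext (init x) (x ord_max) = x.
Proof.
apply/ffunP => k; case: (ordcase k) => [[k' ->]|->].
  by rewrite ext_widen ffunE.
by rewrite ext_max.
Qed.

Ltac ordv := rewrite /= ?/bump; repeat match goal with
  |- context [(?a <= ?b)%N] => case: (leqP a b) => ? end; lia.

Lemma del_ext n (w : {ffun 'I_n.+1 -> T}) y i :
  del (widen_ord (leqnSn n.+1) i) (ext w y) = ext (del i w) y.
Proof.
apply/ffunP => k; rewrite [LHS]ffunE; case: (ordcase k) => [[k' ->]|->].
  rewrite ext_widen [RHS]ffunE; apply: extL; have := ltn_ord i; have := ltn_ord k'; ordv.
rewrite ext_max; apply: extR; have := ltn_ord i; ordv.
Qed.

Variable mul : T -> T -> T.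

Lemma delmul_ext_max n (w : {ffun 'I_n.+1 -> T}) y i :
  delmul mul (widen_ord (leqnSn n.+1) i) ord_max (ext w y) =
  ext (del i w) (mul (w i) y).
Proof.
apply/ffunP => k; rewrite [LHS]ffunE; case: (ordcase k) => [[k' ->]|->].
  rewrite (ext_widen (del i w)) [del i w _]ffunE; case: eqP => [/(congr1 val)|_].
    have := ltn_ord i; have := ltn_ord k'; ordv.
  apply: extL; have := ltn_ord i; have := ltn_ord k'; ordv.
rewrite ext_max; case: eqP => [_|[]]; last first.
  apply: val_inj; have := ltn_ord i; ordv.
by rewrite ext_widen ext_max.
Qed.

Lemma delmul_ext n (w : {ffun 'I_n.+1 -> T}) y i j :
  delmul mul (widen_ord (leqnSn n.+1) i) (widen_ord (leqnSn n.+1) j) (ext w y) =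
  ext (delmul mul i j w) y.
Proof.
apply/ffunP => k; rewrite [LHS]ffunE; case: (ordcase k) => [[k' ->]|->].
  rewrite (ext_widen (delmul mul i j w)) [delmul mul i j w _]ffunE !ext_widen.
  have -> : (lift (widen_ord (leqnSn n.+1) i) (widen_ord (leqnSn n) k') ==
     widen_ord (leqnSn n.+1) j) = (lift i k' == j).
    by apply/eqP/eqP => /(congr1 val) H; apply: val_inj; move: H; ordv.
  case: eqP => // _; apply: extL; have := ltn_ord i; have := ltn_ord k'; ordv.
rewrite ext_max; case: eqP => [/(congr1 val)|_].
  have := ltn_ord i; have := ltn_ord j; ordv.
apply: extR; have := ltn_ord i; ordv.
Qed.

Lemma ext_upd n (w : {ffun 'I_n -> T}) y k t :
  ext (upd w k t) y = upd (ext w y) (widen_ord (leqnSn n) k) t.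
Proof.
apply/ffunP => l; rewrite [RHS]ffunE; case: (ordcase l) => [[l' ->]|->].
  rewrite !ext_widen ffunE; case: eqP => [->|H]; first by rewrite eqxx.
  case: eqP => // /(congr1 val) /= /val_inj; done.
rewrite !ext_max; case: eqP => // /(congr1 val) /=; have := ltn_ord k; lia.
Qed.

Lemma ext_updmax n (w : {ffun 'I_n -> T}) y t :
  ext w t = upd (ext w y) ord_max t.
Proof.
apply/ffunP => l; rewrite [RHS]ffunE; case: (ordcase l) => [[l' ->]|->].
  rewrite !ext_widen; case: eqP => // /(congr1 val) /=; have := ltn_ord l'; lia.
by rewrite eqxx ext_max.
Qed.

End Ord.
Section Alg.
Variables (F : fieldType) (L M : lmodType F) (mul : L -> L -> L) (act : L -> M -> M).
Hypothesis Hmul : bilinear_map mul.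
Hypothesis Hact : bilinear_map act.

Local Notation H := (Defs.hom L M).

Lemma linmapP (g : L -> M) : (forall a u v, g (a*:u+v) = a*:g u + g v) -> g \is @linmap F L M.
Proof. by move=> Hg; rewrite qualifE; apply/asboolP. Qed.

Lemma linmapE (h : H) a u v : h (a*:u+v) = a *: h u + h v.
Proof. by have := hom_valP h; rewrite qualifE => /asboolP. Qed.

Lemma hv0 (y : L) : hom_val (0 : H) y = 0.
Proof. by rewrite (GRing.val0 H). Qed.

Lemma hvD (u v : H) y : hom_val (u + v) y = hom_val u y + hom_val v y.
Proof. by rewrite (GRing.valD u v). Qed.

Lemma hvZ a (u : H) y : hom_val (a *: u) y = a *: hom_val u y.
Proof. by rewrite (GRing.valZ a u). Qed.

Lemma hvN (u : H) y : hom_val (- u) y = - hom_val u y.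
Proof. by rewrite (GRing.valN u). Qed.

Lemma hv_sum I r (P : pred I) (G : I -> H) y :
  hom_val (\sum_(i <- r | P i) G i) y = \sum_(i <- r | P i) hom_val (G i) y.
Proof.
elim/big_rec2: _ => [|i a b _ <-]; first by rewrite hv0.
by rewrite hvD.
Qed.

Lemma hom_actE x (h : H) y :
  hom_val (hom_act mul act x h) y = act x (h y) - h (mul x y).
Proof.
rewrite /hom_act insubdK //; apply: linmapP => a u v.
rewrite Hmul.1 !linmapE Hact.1 scalerBr opprD addrACA.
done.
Qed.

Definition phi m (f : cochain L M m.+1) : cochain L H m :=
  fun w => insubd 0 (fun y => f (ext w y)).
Definition psi m (h : cochain L H m) : cochain L M m.+1 :=
  fun x => hom_val (h (init x)) (x ord_max).

Lemma phiE m (f : cochain L M m.+1) w y :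
  multilinear f -> hom_val (phi f w) y = f (ext w y).
Proof.
move=> Hf; rewrite /phi insubdK //; apply: linmapP => a u v.
by rewrite (ext_updmax w u (a*:u+v)) (ext_updmax w u v) Hf -!ext_updmax.
Qed.

Definition dA := dHL mul act (@ract_a F L M).
Definition dT := dHLt mul (hom_act mul act).

Lemma key m (f : cochain L M m.+1) w y : multilinear f ->
  hom_val (dT (phi f) w) y = dA f (ext w y).
Proof.
move=> Hf; rewrite /dT /dA /dHLt /dHL hvD !hv_sum.
under eq_bigr do rewrite hvZ hom_actE !phiE //.
under [X in _ + X = _]eq_bigr do rewrite hv_sum.
under [X in _ + X = _]eq_bigr do under eq_bigr do rewrite hvZ phiE //.
rewrite /ract_a scaler0 addr0.
rewrite [X in _ = X + _]big_mkcond [X in _ = X + _]big_ord_recr /= ltnn addr0.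
under [X in _ = X + _]eq_bigr do rewrite ltn_ord ext_widen del_ext.
rewrite [X in _ = _ + X]big_ord_recr /=.
have -> : \sum_(j < m.+2 | (m.+1 < j)%N) (-1) ^+ m.+2 *: f (delmul mul ord_max j (ext w y)) = 0.
  by rewrite big1 // => j; rewrite ltnNge -ltnS ltn_ord.
rewrite addr0.
under [X in _ = _ + X]eq_bigr do rewrite big_mkcond big_ord_recr /= ltn_ord -big_mkcond /=.
under [X in _ = _ + X]eq_bigr => i _ do under eq_bigr do rewrite delmul_ext.
under [X in _ = _ + X]eq_bigr => i _ do rewrite delmul_ext_max.
rewrite [X in _ = _ + X]big_split /=.
under eq_bigr do rewrite scalerBr.
rewrite sumrB.
set A := \sum_(i < m.+1) _ *: act _ _.
set B := \sum_(i < m.+1) _ *: f (ext _ (mul _ _)).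
have -> : \sum_(i < m.+1) (-1) ^+ i.+1 *: f (ext (del i w) (mul (w i) y)) = - B.
  by rewrite /B -sumrN; apply: eq_bigr => i _; rewrite exprS mulN1r scaleNr.
by rewrite addrAC -addrA.
Qed.

Lemma zid (V : zmodType) (a b c d e k : V) :
  (a - e) - k = ((a - b) - (c - d)) - ((e - c) - (b - (k + d))).
Proof.
rewrite !opprB ?opprD ?opprK.
by rewrite addrACA subrKA subrKA !addrA addrNK addrAC.
Qed.

Section Lin.
Variables (V W : lmodType F) (g : V -> W).
Hypothesis Hg : forall a u v, g (a*:u+v) = a*:g u + g v.
Lemma lin0 : g 0 = 0.
Proof.
have H0 := Hg 1 0 0; rewrite !scale1r addr0 in H0.
by apply: (addrI (g 0)); rewrite addr0 -H0.
Qed.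
Lemma linD u v : g (u + v) = g u + g v.
Proof. by have := Hg 1 u v; rewrite !scale1r. Qed.
Lemma linN v : g (- v) = - g v.
Proof. by have := Hg (-1) v 0; rewrite !scaleN1r !addr0 lin0 addr0. Qed.
Lemma linB u v : g (u - v) = g u - g v.
Proof. by rewrite linD linN. Qed.
End Lin.

Lemma hvB (u v : H) y : hom_val (u - v) y = hom_val u y - hom_val v y.
Proof. by rewrite hvD hvN. Qed.


Lemma hom_eq (u v : H) : (forall y, hom_val u y = hom_val v y) -> u = v.
Proof. by move=> E; apply: val_inj; apply: funext. Qed.

Lemma deg0 (g : cochain L M 0) x : dA g x = 0.
Proof.
rewrite /dA /dHL /ract_a scaler0 addr0 big1 ?add0r.
  by rewrite big1 // => i _; rewrite big1 // => j; rewrite !ord1 ltnn.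
by move=> i; rewrite ord1.
Qed.

Lemma ml_comb (V : lmodType F) n (f g : cochain L V n) a :
  multilinear f -> multilinear g -> multilinear (a *: f + g).
Proof.
move=> Hf Hg k x b u v; rewrite !fctE Hf Hg !scalerDr !scalerA mulrC -!addrA.
by congr (_ + _); rewrite addrCA.
Qed.

Lemma phi_ml m (f : cochain L M m.+1) : multilinear f -> multilinear (phi f).
Proof.
move=> Hf k w a u v; apply: hom_eq => y.
by rewrite hvD hvZ !phiE // !ext_upd Hf.
Qed.

Lemma psi_ml m (h : cochain L H m) : multilinear h -> multilinear (psi h).
Proof.
move=> Hh k x a u v; rewrite /psi.
case: (ordcase k) => [[k' ->]|->].
  have E t : init (upd x (widen_ord (leqnSn m) k') t) = upd (init x) k' t.
    apply/ffunP => l; rewrite !ffunE.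
    have -> : (widen_ord (leqnSn m) l == widen_ord (leqnSn m) k') = (l == k').
      by apply/eqP/eqP => [E|->//]; apply: val_inj; exact: (congr1 val E).
    done.
  have E2 t : upd x (widen_ord (leqnSn m) k') t ord_max = x ord_max.
    rewrite ffunE; case: eqP => // /(congr1 val) /=; have := ltn_ord k'; lia.
  by rewrite !E !E2 Hh hvD hvZ.
have E t : init (upd x ord_max t) = init x.
  apply/ffunP => l; rewrite !ffunE; case: eqP => // /(congr1 val) /=.
  have := ltn_ord l; lia.
have E2 t : upd x ord_max t ord_max = t by rewrite ffunE eqxx.
by rewrite !E !E2 linmapE.
Qed.

Lemma phi_psi m (h : cochain L H m) w : phi (psi h) w = h w.
Proof.
apply: hom_eq => y; rewrite /phi insubdK /psi ?init_ext ?ext_max //.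
by apply: linmapP => a u v; rewrite !init_ext !ext_max linmapE.
Qed.

Lemma psi_phi m (f : cochain L M m.+1) x : multilinear f -> psi (phi f) x = f x.
Proof. by move=> Hf; rewrite /psi phiE // ext_init. Qed.

Lemma phi_cocycle m (f : cochain L M m.+1) :
  cocycle dA f -> cocycle dT (phi f).
Proof.
case=> Hf Hd; split; first exact: phi_ml.
by move=> w; apply: hom_eq => y; rewrite key // Hd hv0.
Qed.

Lemma hom_act0 x : hom_act mul act x 0 = 0.
Proof.
apply: hom_eq => y; rewrite hom_actE !hv0 subr0.
exact: (lin0 (Hact.1 x)).
Qed.

Lemma dT0 k (x : {ffun 'I_k.+1 -> L}) : dT ((fun _ => 0) : cochain L H k) x = 0.
Proof.
rewrite /dT /dHLt big1 ?add0r.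
  by rewrite big1 // => i _; rewrite big1 // => j _; rewrite scaler0.
by move=> i _; rewrite hom_act0 scaler0.
Qed.

Lemma iso_gen m : cohomology_iso dA dT m.+1 m.
Proof.
exists (@phi m); split.
- exact: phi_cocycle.
- move=> a f g [Hf _] [Hg _] ; apply: funext => w; apply: hom_eq => y.
  by rewrite hvD hvZ !phiE //; exact: ml_comb.
- move=> f [Hf _]; case: m f Hf => [|k] f Hf [g [Hg E]] /=.
    by move=> w; apply: hom_eq => y; rewrite phiE // E deg0 hv0.
  exists (phi g); split; first exact: phi_ml.
  by move=> w; apply: hom_eq => y; rewrite phiE // E key.
- move=> f [Hf _]; case: m f Hf => [|k] f Hf /= Hc.
    exists (fun _ => 0); split; first by case.
    by move=> x; rewrite deg0 -psi_phi // /psi Hc hv0.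
  case: Hc => g' [Hg' E]; exists (psi g'); split; first exact: psi_ml.
  move=> x; rewrite -(ext_init x) -key; last exact: psi_ml.
  by rewrite (funext (phi_psi g')) -E phiE.
- move=> h [Hh Hd]; exists (psi h).
    split; first exact: psi_ml.
    move=> x; rewrite -(ext_init x) -key; last exact: psi_ml.
    by rewrite (funext (phi_psi h)) Hd hv0.
  case: m h Hh Hd => [|k] h Hh Hd /=.
    by move=> w; rewrite !fctE phi_psi subrr.
  exists (fun _ => 0); split; first by move=> *; rewrite scaler0 addr0.
  by move=> x; rewrite dT0 !fctE phi_psi subrr.
Qed.

Lemma hom_module
  (Hleib : forall x y z, mul x (mul y z) = mul (mul x y) z + mul y (mul x z))
  (Hmod : forall x y m, act (mul x y) m = act x (act y m) - act y (act x m)) :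
  left_module mul (hom_act mul act).
Proof.
split; first split.
- move=> x a u v; apply: hom_eq => y.
  rewrite hvD hvZ !hom_actE hvD hvZ Hact.1 hvD hvZ scalerBr opprD addrACA.
  done.
- move=> h a u v; apply: hom_eq => y.
  rewrite hvD hvZ !hom_actE Hact.2 Hmul.2 linmapE scalerBr opprD addrACA.
  done.
- move=> x y h; apply: hom_eq => z.
  rewrite hvD hvN !hom_actE.
  rewrite (linB (Hact.1 x)) (linB (Hact.1 y)) (Hleib x y z) (linD (linmapE h)) Hmod.
  exact: zid.
Qed.
End Alg.

Lemma dHL_s (F : fieldType) (L V : lmodType F) (mul : L -> L -> L)
  (act : L -> V -> V) n (f : cochain L V n) x :
  dHL mul act (ract_s act) f x = dHLt mul act f x.
Proof.
rewrite /dHL /dHLt /ract_s; congr (_ + _).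
rewrite big_mkcond big_ord_recr /= ltnn addr0 [RHS]big_ord_recr /=.
congr (_ + _); first by apply: eq_bigr => i _; rewrite ltn_ord.
by rewrite exprS mulN1r scaleNr scalerN opprK.
Qed.

Lemma same_from (F : fieldType) (L V : lmodType F)
  (d1 d2 : forall n, cochain L V n -> cochain L V n.+1) :
  (forall n f x, d1 n f x = d2 n f x) -> forall n, same_cohomology d1 d2 n.
Proof.
move=> E n; split => f.
  split => -[Hf Hd]; split => // x; first [by rewrite -E | by rewrite E].
case: n f => [|m] f //=; split => -[g [Hg Hx]]; exists g; split => // x;
  first [by rewrite Hx E | by rewrite Hx -E].
Qed.

Theorem lemma1p4 (F : fieldType) (L M : lmodType F)
    (mul : L -> L -> L) (act : L -> M -> M) :
  left_leibniz mul -> left_module mul act ->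
  (* (a) HL^n(L, M_s) = \tilde{HL}^n(L, M) for all n >= 0 *)
  (forall n : nat,
     same_cohomology (dHL mul act (ract_s act)) (dHLt mul act) n) /\
  (* (b) HL^0(L, M_a) = M *)
  ((forall m : M, cocycle (dHL mul act (@ract_a F L M)) (n := 0) (fun _ => m)) /\
   (forall f : cochain L M 0, cocycle (dHL mul act (@ract_a F L M)) f ->
      exists m : M, f = fun _ => m)) /\
  (* Hom_F(L, M) is a left L-module via (x.f)(y) = x.f(y) - f(xy) *)
  left_module mul (hom_act mul act) /\
  (* HL^n(L, M_a) ~= \tilde{HL}^{n-1}(L, Hom_F(L,M)) = HL^{n-1}(L, Hom_F(L,M)_s), n >= 1 *)
  (forall n : nat, (1 <= n)%N ->
     cohomology_iso (dHL mul act (@ract_a F L M)) (dHLt mul (hom_act mul act))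
       n n.-1 /\
     same_cohomology (dHLt mul (hom_act mul act))
       (dHL mul (hom_act mul act) (ract_s (hom_act mul act))) n.-1).
Proof.
move=> [Hmb Hleib] [Hab Hmod].
split; first by apply: same_from => n f x; exact: dHL_s.
split; first split.
- move=> m; split; first by case.
  by move=> x; exact: deg0.
- move=> f _; exists (f [ffun=> 0]); apply: funext => x; congr f.
  by apply/ffunP => -[k Hk].
split; first exact: hom_module.
move=> [//|m] _; split; first exact: iso_gen.
by apply: same_from => n f x; rewrite dHL_s.
Qed.
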